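(* Let $m$ be an even integer with $m\ge 62$, and let $\beta(m)$ be the largest root of $Z(x)=x^3-x^2-(m-2)x+m-3$. Then $\sqrt{m-2}<\beta(m)<\sqrt{m-1.85}$. *)

(* Defs.v *)
From Stdlib Require Import Reals.
Open Scope R_scope.

Definition Zpoly (m : R) (x : R) : R := x ^ 3 - x ^ 2 - (m - 2) * x + m - 3.

Definition is_largest_root (m b : R) : Prop :=
  Zpoly m b = 0 /\ forall x : R, Zpoly m x = 0 -> x <= b.

(* Main.v *)
Require Import Defs.
From Stdlib Require Import Reals ZArith Lra Psatz.
Open Scope R_scope.

Lemma Zmono (M s x y : R) : s * s = M - 2 -> 7 <= s -> s <= y -> y < x ->
  Zpoly M y < Zpoly M x.
Proof.
  intros Hs H7 Hy Hx. unfold Zpoly.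
  assert (F : 0 < x*x + x*y + y*y - x - y - (M-2)).
  { assert (y*y - y >= s*s - s) by nra.
    assert (x*x - x >= s*s - s) by nra.
    assert (x*y >= s*s) by nra. nra. }
  assert (E : x ^ 3 - x ^ 2 - (M - 2) * x + M - 3 - (y ^ 3 - y ^ 2 - (M - 2) * y + M - 3)
     = (x - y) * (x*x + x*y + y*y - x - y - (M-2))) by ring.
  assert (0 < (x - y) * (x*x + x*y + y*y - x - y - (M-2))) by (apply Rmult_lt_0_compat; lra).
  lra.
Qed.

Theorem lemma2p4 (m : Z) (Heven : Z.Even m) (Hm : (62 <= m)%Z) :
  exists b : R, is_largest_root (IZR m) b /\
    sqrt (IZR m - 2) < b /\ b < sqrt (IZR m - 185 / 100).
Proof.
  apply IZR_le in Hm.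
  set (M := IZR m) in *.
  set (s := sqrt (M - 2)). set (t := sqrt (M - 185/100)).
  assert (Hs2 : s * s = M - 2) by (apply sqrt_sqrt; lra).
  assert (Ht2 : t * t = M - 185/100) by (apply sqrt_sqrt; lra).
  assert (Hs0 : 0 <= s) by apply sqrt_pos.
  assert (Ht0 : 0 <= t) by apply sqrt_pos.
  assert (Hs7 : 7 <= s) by nra.
  assert (Ht7 : 23/3 < t) by nra.
  assert (Hst : s < t) by nra.
  assert (Zs : Zpoly M s = -1).
  { unfold Zpoly. replace (s^3) with (s*(s*s)) by ring. replace (s^2) with (s*s) by ring.
    rewrite Hs2. ring. }
  assert (Zt : 0 < Zpoly M t).
  { unfold Zpoly. replace (t^3) with (t*(t*t)) by ring. replace (t^2) with (t*t) by ring.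
    rewrite Ht2. nra. }
  assert (Hc : continuity (Zpoly M)).
  { unfold Zpoly. reg. }
  destruct (IVT (Zpoly M) s t Hc Hst ltac:(lra) Zt) as [z [[Hz1 Hz2] Hz]].
  exists z. split; [split; [exact Hz|] |].
  - intros x Hx. destruct (Rle_or_lt x z) as [H|H]; [exact H|].
    pose proof (Zmono M s x z Hs2 Hs7 Hz1 H). lra.
  - split.
    + destruct Hz1 as [H|H]; [exact H|]. subst z. lra.
    + destruct Hz2 as [H|H]; [exact H|]. subst z. lra.
Qed.
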